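(* For $n\ge1$, the expected total fringe size $E^L_n=\sum_{r\ge0}E^L_{n;r}$ of a simple two-dimensional lattice path chosen uniformly at random among the $4^n$ paths of length $n$ is \[ E^L_n=\frac{4}{3\cdot4^n}\sum_{k=1}^n\Big(2k^3\big(2-2^{-v_2(k)}\big)+k\big(2^{v_2(k)+1}-1\big)\Big)\bigg[\binom{2n-1}{n-k}-\binom{2n-1}{n-k-1}\bigg], \] where $v_2(k)$ is the largest $\nu$ such that $2^\nu$ divides $k$, and binomial coefficients with negative lower index are $0$.
   Context: A simple two-dimensional lattice path is a finite nonempty word over the steps $\{\uparrow,\rightarrow,\downarrow,\leftarrow\}$; its length $|\ell|$ is the number of steps. The reduction $\Phi_L(\ell)$ of a path $\ell$ of length $\ge2$: first, if the first step of $\ell$ is vertical, the entire path is rotated by $90^\circ$ clockwise; then, if the last step is horizontal, this last step alone is rotated by $90^\circ$ clockwise. The resulting path decomposes uniquely as $H_1V_1\cdots H_kV_k$ ($k\ge1$) with each $H_i$ a nonempty maximal run of horizontal steps and each $V_i$ a nonempty maximal run of vertical steps. Each block $H_iV_i$ is replaced by $\nearrow$, $\searrow$, $\swarrow$, $\nwarrow$ according as ($H_i$ starts with $\rightarrow$, $V_i$ with $\uparrow$), ($\rightarrow$, $\downarrow$), ($\leftarrow$, $\downarrow$), ($\leftarrow$, $\uparrow$); the diagonal path is then rotated by $45^\circ$ clockwise, giving $\Phi_L(\ell)$ of length $k$. The compactification degree $\mathrm{cdeg}(\ell)$ is the number $m\ge0$ such that $\Phi_L^m(\ell)$ is a single step.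 The size of the $r$th fringe of $\ell$ is $|\Phi_L^r(\ell)|$ if $\mathrm{cdeg}(\ell)\ge r$, and $0$ otherwise; $E^L_{n;r}$ is its expectation over uniformly random paths of length $n$. *)

(* Defs.v *)
From HB Require Import structures.
From mathcomp Require Import all_boot all_order all_algebra.
Set Implicit Arguments. Unset Strict Implicit. Unset Printing Implicit Defensive.
Import Order.TTheory GRing.Theory Num.Theory.

Inductive step := Up | Rt | Dn | Lt.

Definition step_code (s : step) : 'I_4 :=
  match s with Up => inord 0 | Rt => inord 1 | Dn => inord 2 | Lt => inord 3 end.
Definition step_decode (i : 'I_4) : step :=
  match val i with 0 => Up | 1 => Rt | 2 => Dn | _ => Lt end.
Lemma step_codeK : cancel step_code step_decode.
Proof. by case; rewrite /step_decode /= inordK. Qed.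

HB.instance Definition _ := Equality.copy step (can_type step_codeK).
HB.instance Definition _ := Choice.copy step (can_type step_codeK).
HB.instance Definition _ := Countable.copy step (can_type step_codeK).
HB.instance Definition _ := Finite.copy step (can_type step_codeK).

Definition horizontal (s : step) : bool :=
  match s with Rt | Lt => true | _ => false end.
Definition vertical (s : step) : bool := ~~ horizontal s.

Definition rot90 (s : step) : step :=
  match s with Up => Rt | Rt => Dn | Dn => Lt | Lt => Up end.

Inductive dstep := NE | SE | SW | NW.
Definition rot45 (d : dstep) : step :=
  match d with NE => Rt | SE => Dn | SW => Lt | NW => Up end.

(* block H V with H starting with h and V starting with v *)
Definition block_diag (h v : step) : dstep :=
  match h, v with
  | Rt, Up => NE | Rt, _ => SE
  | _, Dn => SW | _, _ => NW
  end.

(* Scan the path; state None = inside a vertical run (or at the start),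
   Some h = inside a horizontal run whose first step is h.
   At each horizontal->vertical transition the block H_i V_i is emitted. *)
Fixpoint blocks (st : option step) (s : seq step) : seq dstep :=
  match s with
  | [::] => [::]
  | x :: s' =>
    if horizontal x then
      match st with Some _ => blocks st s' | None => blocks (Some x) s' end
    else
      match st with Some h => block_diag h x :: blocks None s'
                  | None => blocks None s' end
  end.

(* the reduction Phi_L (meaningful for paths of length >= 2) *)
Definition PhiL (l : seq step) : seq step :=
  match l with
  | [::] => [::]
  | x :: t =>
    let s1 := if vertical x then map rot90 (x :: t) else x :: t in
    let s2 := match s1 with
              | [::] => [::]
              | y :: u => if horizontal (last y u)
                          then rcons (belast y u) (rot90 (last y u))
                          else y :: u
              end in
    map rot45 (blocks None s2)
  end.

(* compactification degree: the m with |Phi_L^m(l)| = 1, computed by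
   iterating Phi_L while the length is >= 2 (fuel size l suffices since
   Phi_L strictly decreases the length of paths of length >= 2). *)
Fixpoint cdeg_fuel (fuel : nat) (l : seq step) : nat :=
  if size l <= 1 then 0 else
  match fuel with 0 => 0 | f.+1 => (cdeg_fuel f (PhiL l)).+1 end.
Definition cdeg (l : seq step) : nat := cdeg_fuel (size l) l.

Definition fringe (r : nat) (l : seq step) : nat :=
  if r <= cdeg l then size (iter r PhiL l) else 0.

Definition ELnr (n r : nat) : rat :=
  (\sum_(t : n.-tuple step) (fringe r t)%:R) / (4 ^ n)%:R.

Definition v2 (k : nat) : nat := logn 2 k.

(* Main.v *)
Require Import Defs.
From HB Require Import structures.
From mathcomp Require Import all_boot all_order all_algebra.
From mathcomp Require Import ring lra zify.
Set Implicit Arguments. Unset Strict Implicit. Unset Printing Implicit Defensive.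
Import Order.TTheory GRing.Theory Num.Theory.
Local Open Scope ring_scope.

Lemma step_decodeK : cancel step_decode step_code.
Proof.
by case=> [[|[|[|[|i]]]] Hi] //; apply: val_inj; rewrite /= inordK.
Qed.

Lemma sum_step (F : step -> rat) :
  \sum_(x : step) F x = F Up + F Rt + F Dn + F Lt.
Proof.
rewrite (reindex step_decode) /=; last first.
  by exists step_code => x _; [apply: step_decodeK | apply: step_codeK].
by rewrite !big_ord_recl big_ord0 /= addr0 !addrA.
Qed.

Lemma sum_tuple0 (F : seq step -> rat) :
  \sum_(t : 0.-tuple step) F t = F [::].
Proof.
rewrite (big_pred1 [tuple]) // => t; symmetry; apply/eqP; apply: val_inj; exact: size0nil (size_tuple t).
Qed.

Lemma sum_tupleS n (F : seq step -> rat) :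
  \sum_(t : n.+1.-tuple step) F t = \sum_(x : step) \sum_(t : n.-tuple step) F (x :: t).
Proof.
rewrite pair_bigA /= (reindex (fun p : step * n.-tuple step => [tuple of p.1 :: p.2])) /=.
  by [].
exists (fun t : n.+1.-tuple step => (thead t, [tuple of behead t])).
  by case=> x t _; congr pair; apply: val_inj.
move=> t _; apply: val_inj => /=.
by case: t => [[|y s] //= Hs]; rewrite /thead (tnth_nth y) /=.
Qed.

Lemma sum_tuple_rev n (F : seq step -> rat) :
  \sum_(t : n.-tuple step) F t = \sum_(t : n.-tuple step) F (rev t).
Proof.
apply: (reindex (fun t : n.-tuple step => [tuple of rev t])).
exists (fun t : n.-tuple step => [tuple of rev t]) => t _; apply: val_inj => /=;
  by rewrite revK.
Qed.

Lemma sum_tupleSr n (F : seq step -> rat) :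
  \sum_(t : n.+1.-tuple step) F t = \sum_(t : n.-tuple step) \sum_(y : step) F (rcons t y).
Proof.
rewrite sum_tuple_rev (sum_tupleS n (fun t => F (rev t))) [RHS]exchange_big /=.
apply: eq_bigr => y _.
rewrite [RHS](sum_tuple_rev n (fun t => F (rcons t y))).
by apply: eq_bigr => t _; rewrite rev_cons.
Qed.

Lemma sum_tuple_map n (F : seq step -> rat) :
  \sum_(t : n.-tuple step) F (map rot90 t) = \sum_(t : n.-tuple step) F t.
Proof.
symmetry; apply: (reindex_inj (h := fun t : n.-tuple step => [tuple of map rot90 t])).
move=> s t /(congr1 val) /= H; apply: val_inj.
apply: inj_map H; by case; case.
Qed.

Lemma sum_tuple_const n (c : rat) :
  \sum_(t : n.-tuple step) c = (4 ^ n)%:R * c.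
Proof.
elim: n => [|n IH]; first by rewrite (sum_tuple0 (fun _ => c)) expn0 mul1r.
rewrite (sum_tupleS n (fun _ => c)) sum_step IH expnS natrM; ring.
Qed.

Lemma sum_tuple0' (F : 0.-tuple step -> rat) :
  \sum_(t : 0.-tuple step) F t = F [tuple].
Proof.
rewrite (big_pred1 [tuple]) // => t; symmetry; apply/eqP; apply: val_inj; exact: size0nil (size_tuple t).
Qed.

Lemma sum_tupleS' n (F : n.+1.-tuple step -> rat) :
  \sum_(t : n.+1.-tuple step) F t = \sum_(x : step) \sum_(t : n.-tuple step) F [tuple of x :: t].
Proof.
rewrite pair_bigA /= (reindex (fun p : step * n.-tuple step => [tuple of p.1 :: p.2])) /=.
  by [].
exists (fun t : n.+1.-tuple step => (thead t, [tuple of behead t])).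
  by case=> x t _; congr pair; apply: val_inj.
move=> t _; apply: val_inj => /=.
by case: t => [[|y s] //= Hs]; rewrite /thead (tnth_nth y) /=.
Qed.

Lemma sum_ext (F : nat -> rat) n K : (n <= K)%N -> (forall k, (n <= k)%N -> F k = 0) ->
  \sum_(k < K) F k = \sum_(k < n) F k.
Proof.
move=> HK HF; rewrite [RHS](big_ord_widen _ _ HK) [RHS]big_mkcond /=.
apply: eq_bigr => i _; case: ifP => // /negbT; rewrite -leqNgt; exact: HF.
Qed.

Lemma size_blocks (w : seq step) :
  (forall h, 2 * size (blocks (Some h) w) <= (size w).+1)%N /\
  (2 * size (blocks None w) <= size w)%N.
Proof.
elim: w => [|x w [IH1 IH2]] /=; first by split.
have H1 := IH1 Rt; have H1' := IH1 Lt.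
case: x => /=; split => [h|] /=; try have := IH1 h; lia.
Qed.

Definition fixv (y : step) := if horizontal y then rot90 y else y.
Definition hx (x : step) := if vertical x then rot90 x else x.
Definition sx (x : step) (s : seq step) := if vertical x then map rot90 s else s.
Definition yx (x y : step) := fixv (if vertical x then rot90 y else y).

Lemma PhiL_cons_rcons x s y :
  PhiL (x :: rcons s y) = map rot45 (blocks (Some (hx x)) (rcons (sx x s) (yx x y))).
Proof.
rewrite /PhiL /hx /sx /yx /fixv.
case: x => /=; rewrite ?map_rcons ?last_rcons ?belast_rcons;
  case: y => //=.
Qed.

Lemma size_PhiL l : (2 <= size l)%N -> (size (PhiL l) < size l)%N.
Proof.
case: l => [|x t] //; case/lastP: t => [|s y] // _.
rewrite PhiL_cons_rcons size_map /= size_rcons.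
have := (size_blocks (rcons (sx x s) (yx x y))).1 (hx x).
rewrite size_rcons /sx; case: (vertical x); rewrite ?size_map; lia.
Qed.

Lemma cdeg_fuel_le f l : (cdeg_fuel f l <= f)%N.
Proof.
elim: f l => [|f IH] l /=; first by case: ifP.
case: ifP => // _; exact: IH.
Qed.

Lemma cdeg_le l : (cdeg l <= size l)%N.
Proof. exact: cdeg_fuel_le. Qed.

Lemma cdeg_fuel_stable f f' l : (size l <= f.+1)%N -> (size l <= f'.+1)%N ->
  cdeg_fuel f l = cdeg_fuel f' l.
Proof.
elim: f f' l => [|f IH] [|f'] l /= H1 H2; case: ifP => // Hs; try lia.
congr S; apply: IH; have := size_PhiL (l := l); lia.
Qed.

Lemma cdeg_PhiL l : (2 <= size l)%N -> cdeg l = (cdeg (PhiL l)).+1.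
Proof.
move=> Hl; rewrite /cdeg.
have HP := size_PhiL Hl.
case E: (size l) => [|m]; first lia.
rewrite /= E ifN; last lia.
congr S; apply: cdeg_fuel_stable; lia.
Qed.

Definition totf (l : seq step) : rat :=
  \sum_(r < (cdeg l).+1) (size (iter r PhiL l))%:R.

Lemma totf_PhiL l : (2 <= size l)%N -> totf l = (size l)%:R + totf (PhiL l).
Proof.
move=> Hl; rewrite /totf (cdeg_PhiL Hl) big_ord_recl /=; congr (_ + _).
by apply: eq_bigr => i _; rewrite add0n -iterS iterSr.
Qed.

Lemma totf1 l : size l = 1%N -> totf l = 1.
Proof.
move=> Hl; rewrite /totf; have -> : cdeg l = 0%N by rewrite /cdeg Hl /= Hl.
by rewrite big_ord_recl big_ord0 /= Hl addr0.
Qed.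

Lemma sum_fringe N l : (cdeg l < N)%N ->
  \sum_(r < N) ((fringe r l)%:R : rat) = totf l.
Proof.
move=> HN; rewrite /totf.
rewrite -(big_mkord xpredT (fun r => (fringe r l)%:R)).
rewrite (big_cat_nat (leq0n (cdeg l).+1) HN) /=.
rewrite [X in _ + X]big1_seq ?addr0; last first.
  by move=> i /andP [_]; rewrite mem_index_iota => /andP [H _]; rewrite /fringe leqNgt H.
rewrite big_mkord; apply: eq_bigr => i _.
by rewrite /fringe -ltnS ltn_ord.
Qed.

Definition CN m (g : seq step -> rat) :=
  \sum_(s : m.-tuple step) (g (map rot45 (blocks None (rcons s Up)))
                           + g (map rot45 (blocks None (rcons s Dn)))).
Definition cs1 h (s : seq step) (g : seq step -> rat) :=
  g (map rot45 (blocks (Some h) (rcons s Up))) + g (map rot45 (blocks (Some h) (rcons s Dn))).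
Definition CS m (g : seq step -> rat) :=
  \sum_(s : m.-tuple step) (cs1 Rt s g + cs1 Lt s g).
Definition U k (g : seq step -> rat) := \sum_(u : k.-tuple step) g u.

Lemma U_S k g : U k.+1 g = \sum_(x : step) U k (fun u => g (x :: u)).
Proof. by rewrite /U sum_tupleS'. Qed.

Lemma U_0 g : U 0 g = g [::].
Proof. by rewrite /U sum_tuple0'. Qed.

Lemma CN_S m g : CN m.+1 g = 2 * CN m g + CS m g.
Proof.
rewrite /CN /CS sum_tupleS' sum_step -!big_split mulr_sumr -big_split /=.
apply: eq_bigr => t _; rewrite /cs1; ring.
Qed.

Lemma CS_S m g : CS m.+1 g = 2 * CS m g +
  (CN m (fun u => g (Up :: u)) + CN m (fun u => g (Rt :: u))
   + CN m (fun u => g (Dn :: u)) + CN m (fun u => g (Lt :: u))).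
Proof.
rewrite /CN /CS sum_tupleS' sum_step -!big_split mulr_sumr -!big_split /=.
apply: eq_bigr => t _; rewrite /cs1 /=; ring.
Qed.

Lemma CN_0 g : CN 0 g = 2 * g [::].
Proof. rewrite /CN sum_tuple0' /=; ring. Qed.

Lemma CS_0 g : CS 0 g = U 1 g.
Proof.
rewrite /CS U_S sum_step !U_0 sum_tuple0' /cs1 /=; ring.
Qed.

Fixpoint ab (m : nat) : (nat -> rat) * (nat -> rat) :=
  match m with
  | 0 => (fun k => if k == 0%N then 2 else 0, fun k => if k == 1%N then 1 else 0)
  | m'.+1 => let p := ab m' in
      (fun k => 2 * p.1 k + p.2 k,
       fun k => 2 * p.2 k + (if k is k'.+1 then p.1 k' else 0))
  end.
Definition aa m k := (ab m).1 k.
Definition bb m k := (ab m).2 k.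

Lemma aaS m k : aa m.+1 k = 2 * aa m k + bb m k. Proof. by []. Qed.
Lemma bbS m k : bb m.+1 k = 2 * bb m k + (if k is k'.+1 then aa m k' else 0).
Proof. by []. Qed.

Lemma ab_zero m : (forall k, (m < k)%N -> aa m k = 0) /\ (forall k, (m.+1 < k)%N -> bb m k = 0).
Proof.
elim: m => [|m [IHa IHb]].
  by split => [[|k]|[|[|k]]].
split => k Hk.
  rewrite aaS IHa; last lia.
  rewrite IHb; last lia. lra.
rewrite bbS IHb; last lia.
case: k Hk => [|k] Hk; first lra.
rewrite IHa; [lra|lia].
Qed.

Lemma CN_CS m : forall g,
  CN m g = \sum_(k < m.+1) aa m k * U k g /\ CS m g = \sum_(k < m.+2) bb m k * U k g.
Proof.
elim: m => [|m IH] g.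
  rewrite CN_0 CS_0 !big_ord_recl !big_ord0 U_0 /aa /bb /=; split; ring.
have [IHN IHS] := IH g.
split.
  rewrite CN_S IHN IHS mulr_sumr.
  rewrite -(@sum_ext (fun k => 2 * (aa m k * U k g)) m.+1 m.+2) //; last first.
    by move=> k Hk; rewrite (ab_zero _).1 ?mul0r ?mulr0.
  rewrite -big_split /=; apply: eq_bigr => i _; rewrite aaS; ring.
rewrite CS_S !(IH (fun u => g _)).1 IHS mulr_sumr.
have E : forall k : 'I_m.+1, aa m k * U k (fun u => g (Up :: u)) + aa m k * U k (fun u => g (Rt :: u))
   + aa m k * U k (fun u => g (Dn :: u)) + aa m k * U k (fun u => g (Lt :: u)) = aa m k * U k.+1 g.
  by move=> k; rewrite U_S sum_step; ring.
rewrite -!big_split /= (eq_bigr _ (fun k _ => E k)).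
rewrite [RHS]big_ord_recl [X in X + _ = _]big_ord_recl.
rewrite (@sum_ext (fun i => bb m.+1 i.+1 * U i.+1 g) m.+1 m.+2) //; last first.
  move=> k Hk; rewrite bbS (ab_zero m).2; last lia.
  rewrite (ab_zero m).1; last lia. ring.
rewrite -addrA -big_split /=.
rewrite bbS; congr (_ + _); first ring.
by apply: eq_bigr => i _; rewrite bbS; ring.
Qed.

Lemma inner_y x (s : seq step) (g : seq step -> rat) :
  \sum_(y : step) g (map rot45 (blocks (Some (hx x)) (rcons (sx x s) (yx x y))))
  = 2 * cs1 (hx x) (sx x s) g.
Proof. rewrite sum_step /cs1; case: x => /=; ring. Qed.

Lemma inner x n (g : seq step -> rat) :
  \sum_(s : n.-tuple step) \sum_(y : step)
     g (map rot45 (blocks (Some (hx x)) (rcons (sx x s) (yx x y))))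
  = 2 * \sum_(s : n.-tuple step) cs1 (hx x) s g.
Proof.
rewrite mulr_sumr; under eq_bigr do rewrite inner_y.
rewrite /sx; case: x => //=; exact: (sum_tuple_map n (fun s => 2 * cs1 _ s g)).
Qed.

Lemma sum_PhiL n (g : seq step -> rat) :
  \sum_(t : n.+2.-tuple step) g (PhiL t) = 4 * CS n g.
Proof.
rewrite (sum_tupleS n.+1 (fun t => g (PhiL t))).
under eq_bigr do rewrite (sum_tupleSr n (fun t => g (PhiL (_ :: t)))).
under eq_bigr do under eq_bigr do under eq_bigr do rewrite PhiL_cons_rcons.
under eq_bigr do rewrite inner.
rewrite sum_step /CS /cs1 !big_split /hx /=; ring.
Qed.

Definition TT n := U n totf.

Lemma TT_rec n : TT n.+2 = (n.+2)%:R * (4 ^ n.+2)%:R + 4 * \sum_(k < n.+2) bb n k * TT k.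
Proof.
rewrite /TT /U.
under eq_bigr => t _ do rewrite totf_PhiL ?size_tuple //.
rewrite big_split /= sum_tuple_const (sum_PhiL n totf) (CN_CS n totf).2; ring.
Qed.

Lemma TT1 : TT 1 = 4.
Proof.
rewrite /TT /U; under eq_bigr => t _ do rewrite totf1 ?size_tuple //.
rewrite sum_tuple_const; ring.
Qed.

Lemma TT0 : TT 0 = 0.
Proof.
by rewrite /TT U_0 /totf /cdeg /= big_ord_recl big_ord0 /= addr0.
Qed.

Definition Q n k : rat :=
  match n with 0 => (k == 0%N)%:R | 1 => 0 | m.+2 => bb m k end.

Lemma bb0 m : bb m 0 = 0.
Proof. by elim: m => [|m IH] //; rewrite bbS IH; ring. Qed.

Lemma Q0 n : Q n 0 = (n == 0%N)%:R.
Proof. by case: n => [|[|m]] //=; rewrite bb0. Qed.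

Lemma Qrec n k : Q n.+2 k.+1 = 4 * Q n.+1 k.+1 - 4 * Q n k.+1 + Q n k.
Proof.
case: n => [|[|m]] /=.
- by rewrite /bb /=; case: k => //=; ring.
- by rewrite /bb /=; case: k => //=; ring.
- rewrite bbS aaS bbS; ring.
Qed.

Lemma Q_zero n k : (0 < k)%N -> (n <= k)%N -> Q n k = 0.
Proof.
case: n => [|[|m]] /=; first by case: k.
  by [].
move=> H1 H2; apply: (ab_zero m).2; lia.
Qed.

Fixpoint P n : nat -> rat :=
  match n with
  | 0 => fun k => (k == 0%N)%:R
  | n'.+1 => fun k => if k is k'.+1 then P n' k' + 2 * P n' k + P n' k.+1 else 0
  end.

Lemma PS n k : P n.+1 k.+1 = P n k + 2 * P n k.+1 + P n k.+2. Proof. by []. Qed.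
Lemma P_0 n : P n 0 = (n == 0%N)%:R. Proof. by case: n. Qed.

Lemma P_zero n k : (n < k)%N -> P n k = 0.
Proof.
elim: n k => [|n IH] [|k] //= H.
rewrite !IH; [ring|lia|lia|lia].
Qed.

Definition RR K n j := \sum_(k < K) Q n k * P k j.
Definition R n j := RR n.+1 n j.

Lemma R_eq K n j : (n < K)%N -> R n j = RR K n j.
Proof.
move=> H; rewrite /R /RR (@sum_ext (fun k => Q n k * P k j) n.+1 K) //.
move=> k Hk; rewrite Q_zero ?mul0r //; lia.
Qed.

Lemma RR_shift K n j : RR K.+1 n j.+1 = \sum_(k < K) Q n k.+1 * P k.+1 j.+1.
Proof. by rewrite /RR big_ord_recl /= mulr0 add0r. Qed.

Definition Good (W : nat -> nat -> rat) :=
  [/\ forall n, W n 0%N = (n == 0%N)%:R, forall j, W 0%N j.+1 = 0,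
      forall j, W 1%N j.+1 = 0 &
      forall n j, W n.+2 j.+1 = 4 * W n.+1 j.+1 - 4 * W n j.+1 + (W n j + 2 * W n j.+1 + W n j.+2)].

Lemma Good_uniq W1 W2 : Good W1 -> Good W2 -> forall n j, W1 n j = W2 n j.
Proof.
case=> [a1 b1 c1 d1] [a2 b2 c2 d2].
suff H : forall n, (forall j, W1 n j = W2 n j) /\ (forall j, W1 n.+1 j = W2 n.+1 j).
  by move=> n j; apply: (H n).1.
elim=> [|n [IH1 IH2]].
  by split=> [[|j]|[|j]]; rewrite ?a1 ?a2 ?b1 ?b2 ?c1 ?c2.
split=> // [[|j]]; first by rewrite a1 a2.
by rewrite d1 d2 !IH1 !IH2.
Qed.

Lemma Good_P2 : Good (fun n j => P n (2 * j)).
Proof.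
split.
- by move=> n; rewrite muln0 P_0.
- by move=> j; rewrite P_zero //; lia.
- by move=> j; rewrite P_zero //; lia.
- move=> n j.
  have -> : (2 * j.+1 = (2 * j).+2)%N by lia.
  have -> : (2 * j.+2 = (2 * j).+4)%N by lia.
  rewrite !PS; ring.
Qed.

Lemma Good_R : Good R.
Proof.
split.
- move=> n; rewrite /R /RR big_ord_recl /= big1 ?addr0 ?Q0 ?mulr1 //.
  by move=> i _; rewrite mulr0.
- by move=> j; rewrite /R /RR big_ord_recl big_ord0 /= mulr0 addr0.
- by move=> j; rewrite /R /RR !big_ord_recl big_ord0 /= !mul0r !addr0.
- move=> n j.
  have h1 : R n.+2 j.+1 = \sum_(k < n.+3) Q n.+2 k.+1 * P k.+1 j.+1.
    rewrite (R_eq (K := n.+4)) ?RR_shift //; lia.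
  have h2 : R n.+1 j.+1 = \sum_(k < n.+3) Q n.+1 k.+1 * P k.+1 j.+1.
    rewrite (R_eq (K := n.+4)) ?RR_shift //; lia.
  have h3 : R n j.+1 = \sum_(k < n.+3) Q n k.+1 * P k.+1 j.+1.
    rewrite (R_eq (K := n.+4)) ?RR_shift //; lia.
  have h4 : R n j + 2 * R n j.+1 + R n j.+2 = \sum_(k < n.+3) Q n k * P k.+1 j.+1.
    rewrite !(R_eq (K := n.+3)); try lia.
    rewrite /RR mulr_sumr -!big_split /=.
    by apply: eq_bigr => k _; ring.
  rewrite h4 h1 h2 h3 !mulr_sumr -sumrB -big_split.
  by apply: eq_bigr => k _; rewrite Qrec /=; ring.
Qed.

Lemma R_P2 n j : R n j = P n (2 * j).
Proof. exact: (Good_uniq Good_R Good_P2). Qed.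

Lemma M_step (f : nat -> rat) n : f 0%N = 0 ->
  \sum_(k < n.+3) f k * P n.+1 k = \sum_(k < n.+3) (f k.+1 + 2 * f k + f k.-1) * P n k.
Proof.
move=> f0.
have EA : \sum_(k < n.+3) f k.+1 * P n k = \sum_(k < n.+2) f k.+1 * P n k.
  by rewrite big_ord_recr /= P_zero // mulr0 addr0.
have EB : \sum_(k < n.+3) 2 * f k * P n k = \sum_(k < n.+2) 2 * f k.+1 * P n k.+1.
  by rewrite big_ord_recl /= f0 !mul0r add0r.
have EC : \sum_(k < n.+3) f k.-1 * P n k = \sum_(k < n.+2) f k.+1 * P n k.+2.
  rewrite big_ord_recl /= big_ord_recl /= f0 !mul0r !add0r [RHS]big_ord_recr /=.
  have hz : P n n.+3 = 0 by apply: P_zero; lia.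
  rewrite hz mulr0 addr0; apply: eq_bigr => i _; by rewrite /bump /= !add1n.
have ED : \sum_(k < n.+3) (f k.+1 + 2 * f k + f k.-1) * P n k =
  \sum_(k < n.+3) f k.+1 * P n k + \sum_(k < n.+3) 2 * f k * P n k + \sum_(k < n.+3) f k.-1 * P n k.
  by rewrite -!big_split /=; apply: eq_bigr => k _; ring.
rewrite ED EA EB EC big_ord_recl P_0 /= mulr0 add0r -!big_split /=.
by apply: eq_bigr => k _; ring.
Qed.

Lemma natS' k : (k.+1)%:R = k%:R + 1 :> rat.
Proof. by rewrite -addn1 natrD. Qed.

Lemma M_step' (f : nat -> rat) n : f 0%N = 0 ->
  \sum_(k < n.+2) f k * P n.+1 k = \sum_(k < n.+1) (f k.+1 + 2 * f k + f k.-1) * P n k.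
Proof.
move=> f0.
have H1 : \sum_(k < n.+3) f k * P n.+1 k = \sum_(k < n.+2) f k * P n.+1 k.
  apply: (@sum_ext (fun k => f k * P n.+1 k) n.+2 n.+3) => [|k Hk]; first lia; rewrite P_zero ?mulr0 //.
have H2 : \sum_(k < n.+3) (f k.+1 + 2 * f k + f k.-1) * P n k
   = \sum_(k < n.+1) (f k.+1 + 2 * f k + f k.-1) * P n k.
  apply: (@sum_ext (fun k => (f k.+1 + 2 * f k + f k.-1) * P n k) n.+1 n.+3) => [|k Hk]; first lia; rewrite P_zero ?mulr0 //.
by rewrite -H1 -H2 M_step.
Qed.

Lemma sum_delta0 n : \sum_(k < n.+1) ((k : nat) == 0%N)%:R * P n k = P n 0.
Proof.
rewrite big_ord_recl /= mul1r big1 ?addr0 //.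
by move=> i _; rewrite mul0r.
Qed.

Lemma M1 n : 4 * \sum_(k < n.+1) k%:R * P n k = (4 ^ n)%:R - (n == 0%N)%:R.
Proof.
elim: n => [|n IH].
  by rewrite big_ord_recl big_ord0 /=; ring.
rewrite (@M_step' (fun k : nat => (k%:R : rat))) //.
have E : forall k : 'I_n.+1, ((k.+1)%:R + 2 * k%:R + (k.-1)%:R) * P n k
   = 4 * (k%:R * P n k) + ((k : nat) == 0%N)%:R * P n k.
  by case=> [[|k] Hk] /=; rewrite ?natS'; ring.
rewrite (eq_bigr _ (fun k _ => E k)) big_split /= -mulr_sumr sum_delta0 P_0.
rewrite mulrDr IH expnS natrM /=; case: (n == 0%N) => /=; ring.
Qed.

Definition alpha k : rat := 4 / 3 * (2 * (k%:R) ^+ 3 + k%:R).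

Lemma Malpha n : \sum_(k < n.+1) alpha k * P n k = n%:R * (4 ^ n)%:R.
Proof.
elim: n => [|n IH].
  by rewrite big_ord_recl big_ord0 /alpha /=; ring.
rewrite (@M_step' alpha); last by rewrite /alpha; ring.
have E : forall k : 'I_n.+1, (alpha k.+1 + 2 * alpha k + alpha k.-1) * P n k
   = 4 * (alpha k * P n k) + 4 * (4 * (k%:R * P n k)) + 4 * (((k : nat) == 0%N)%:R * P n k).
  by case=> [[|k] Hk] /=; rewrite /alpha ?natS'; field.
rewrite (eq_bigr _ (fun k _ => E k)) !big_split /= -!mulr_sumr sum_delta0 P_0.
rewrite M1 IH natS' expnS natrM /=; case: (n == 0%N) => /=; ring.
Qed.

Definition binz (N : nat) (j : int) : nat :=
  match j with Posz i => 'C(N, i) | Negz _ => 0%N end.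

Lemma binz_neg N j : j < 0 -> binz N j = 0%N.
Proof. by case: j. Qed.

Lemma binz_pascal N j : binz N.+1 j = (binz N j + binz N (j - 1))%N.
Proof.
case: j => [[|i]|i].
- have -> : binz N (Posz 0 - 1) = 0%N by apply: binz_neg; lia.
  by rewrite /= !bin0.
- have -> : (Posz i.+1 - 1 = Posz i) by lia.
  by rewrite /= binS addnC.
- by rewrite !binz_neg //; lia.
Qed.

Lemma binz_pascal2 N j : (binz N.+2 j)%:R =
  (binz N j)%:R + 2 * (binz N (j - 1))%:R + (binz N (j - 1 - 1))%:R :> rat.
Proof.
rewrite !binz_pascal !natrD; ring.
Qed.

Definition Bz n k : rat :=
  (binz (2 * n - 1) (n%:Z - k%:Z))%:R - (binz (2 * n - 1) (n%:Z - k%:Z - 1))%:R.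

Lemma P_Bz n k : P n.+1 k = Bz n.+1 k.
Proof.
elim: n k => [|n IH] k.
  case: k => [|[|k]].
  - change (0 = ('C(1,1))%:R - ('C(1,0))%:R :> rat); rewrite bin1 bin0; ring.
  - change (1 = ('C(1,0))%:R - 0%:R :> rat); rewrite bin0; ring.
  - rewrite /Bz (@binz_neg _ (Posz 1 - Posz k.+2)); last lia.
    rewrite (@binz_neg _ (Posz 1 - Posz k.+2 - 1)); last lia.
    rewrite /=; ring.
case: k => [|m].
  rewrite /Bz /= addn0.
  have -> : (n.+2 - 1 = n.+1)%N by lia.
  have -> : (2 * n.+2 - 1 = (2 * n.+1 - 1).+2)%N by lia.
  rewrite /= -[X in _ - X%:R](@bin_sub (2 * n.+1 - 1).+2 n.+1); last lia.
  have -> : ((2 * n.+1 - 1).+2 - n.+1 = n.+2)%N by lia.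
  by rewrite subrr.
rewrite PS !IH /Bz.
have -> : (2 * n.+2 - 1 = (2 * n.+1 - 1).+2)%N by lia.
set N := (2 * n.+1 - 1)%N.
set d := (Posz n.+1 - Posz m).
have -> : Posz n.+2 - Posz m.+1 = d by rewrite /d; lia.
have -> : Posz n.+1 - Posz m.+1 = d - 1 by rewrite /d; lia.
have -> : Posz n.+1 - Posz m.+2 = d - 1 - 1 by rewrite /d; lia.
rewrite !binz_pascal2; ring.
Qed.

Definition cexpr (k : nat) : rat :=
  (2 * (k ^ 3)%:R * (2 - ((2 ^ v2 k)%:R)^-1) + k%:R * ((2 ^ (v2 k).+1)%:R - 1)).
Definition c k := 4 / 3 * cexpr k.

Lemma v2_odd k : odd k -> v2 k = 0%N.
Proof. by move=> Hk; rewrite /v2 lognE dvdn2 Hk !andbF. Qed.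

Lemma v2_double m : (0 < m)%N -> v2 (2 * m) = (v2 m).+1.
Proof.
move=> Hm; rewrite /v2 lognE /= muln_gt0 Hm dvdn_mulr //= mulKn //.
Qed.

Lemma c_rec k : c k = alpha k + (if odd k then 0 else 4 * c k./2).
Proof.
case Ho: (odd k).
  rewrite /c /cexpr /alpha (v2_odd Ho) expn0 natrX /=; by field.
case: k Ho => [|k] Ho.
  by rewrite /c /cexpr /alpha /=; field.
have [m Hm] : exists m, k.+1 = (2 * m)%N.
  exists (k.+1./2); have := odd_double_half k.+1; rewrite Ho -muln2 /=; lia.
rewrite Hm; have Hm0 : (0 < m)%N by lia.
have -> : ((2 * m)./2 = m)%N by lia.
rewrite /c /cexpr /alpha (v2_double Hm0) !expnS !natrM !natrX.
have Hx : ((2 ^ v2 m)%:R : rat) != 0 by rewrite pnatr_eq0 expn_eq0.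
field; by rewrite expf_neq0.
Qed.

Lemma sum_pairs (F : nat -> rat) N :
  \sum_(i < 2 * N) F i = \sum_(j < N) (F (2 * j)%N + F (2 * j).+1).
Proof.
elim: N => [|N IH]; first by rewrite muln0 !big_ord0.
have -> : (2 * N.+1 = (2 * N).+2)%N by lia.
by rewrite !big_ord_recr /= IH addrA.
Qed.

Lemma c0 : c 0 = 0.
Proof. by rewrite /c /cexpr /=; field. Qed.

Lemma c1 : c 1 = 4.
Proof. rewrite /c /cexpr (v2_odd (isT : odd 1)) exp1n expn0 expn1 invr1; by field. Qed.

Lemma TT_formula n : TT n = \sum_(k < n.+1) c k * P n k.
Proof.
elim/ltn_ind: n => -[|[|n]] IH.
- by rewrite TT0 big_ord_recl big_ord0 c0; ring.
- rewrite TT1 !big_ord_recl big_ord0 c0; change (bump 0 0) with 1%N; rewrite c1 /=; ring.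
rewrite TT_rec.
have E1 : forall k : 'I_n.+2, bb n k * TT k = \sum_(j < n.+3) bb n k * (c j * P k j).
  move=> k; have Hk := ltn_ord k.
  rewrite (IH k Hk).
  rewrite mulr_sumr; apply: esym; apply: (@sum_ext (fun j => bb n k * (c j * P k j)) k.+1 n.+3).
    by have := ltn_ord k; lia.
  by move=> j Hj; rewrite P_zero ?mulr0.
rewrite (eq_bigr _ (fun k _ => E1 k)) exchange_big /=.
have E2 : forall j : 'I_n.+3, \sum_(k < n.+2) bb n k * (c j * P k j) = c j * P n.+2 (2 * j).
  move=> j; rewrite -R_P2 /R /RR [X in _ = _ * X]big_ord_recr /= (ab_zero n).2 // mul0r addr0 mulr_sumr.
  by apply: eq_bigr => k _; rewrite /Q; ring.
rewrite (eq_bigr _ (fun j _ => E2 j)).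
rewrite -Malpha.
under [RHS]eq_bigr do rewrite c_rec.
pose G i := if odd i then 0 else c i./2 * P n.+2 i.
have E3 : \sum_(j < n.+3) c j * P n.+2 (2 * j) = \sum_(i < n.+3) G i.
  rewrite -(@sum_ext G n.+3 (2 * n.+3)); last first.
    by move=> k Hk; rewrite /G P_zero ?mulr0 //; case: ifP.
    lia.
  rewrite sum_pairs; apply: eq_bigr => j _.
  rewrite /G !oddS !oddM /=.
  have -> : ((2 * j)./2 = j)%N by lia.
  by rewrite addr0.
rewrite E3 /G mulr_sumr -big_split /=.
apply: eq_bigr => i _; case: (odd i) => /=; ring.
Qed.

Lemma Bz_bin n k : (1 <= k)%N -> (k <= n)%N ->
  Bz n k = ('C(2 * n - 1, n - k))%:R - (if (k < n)%N then 'C(2 * n - 1, n - k - 1) else 0)%:R.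
Proof.
move=> H1 H2; rewrite /Bz subzn //.
case: ifP => Hk.
  have -> : (Posz (n - k) - 1 = Posz (n - k - 1)) by lia.
  by [].
by rewrite (@binz_neg _ (Posz (n - k) - 1)) //; lia.
Qed.

Unset Implicit Arguments.

Theorem corollary3 (n : nat) : (1 <= n)%N ->
  exists N0 : nat, forall N : nat, (N0 <= N)%N ->
    \sum_(r < N) ELnr n r =
    4%:R / (3%:R * (4 ^ n)%:R) *
    \sum_(1 <= k < n.+1)
      ((2 * (k ^ 3)%:R * (2 - ((2 ^ v2 k)%:R)^-1) + k%:R * ((2 ^ (v2 k).+1)%:R - 1))
       * (('C(2 * n - 1, n - k))%:R
          - (if (k < n)%N then 'C(2 * n - 1, n - k - 1) else 0)%:R)) :> rat.
Proof.
move=> Hn; exists n.+1 => N HN.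
have E1 : \sum_(r < N) ELnr n r = TT n / (4 ^ n)%:R.
  rewrite /ELnr -mulr_suml exchange_big /TT /U /=; congr (_ * _).
  apply: eq_bigr => t _; apply: sum_fringe.
  by have := cdeg_le t; rewrite size_tuple; lia.
case: n Hn HN E1 => [|n] // _ _ ->.
have E2 : \sum_(k < n.+2) c k * P n.+1 k = \sum_(k < n.+1) c k.+1 * Bz n.+1 k.+1.
  by rewrite big_ord_recl P_0 mulr0 add0r; apply: eq_bigr => i _; rewrite P_Bz.
rewrite TT_formula E2 big_add1 /= big_mkord mulr_sumr mulr_suml.
apply: eq_bigr => i _.
rewrite (Bz_bin (ltn0Sn _) (ltn_ord i)).
have H4 : ((4 ^ n.+1)%:R : rat) != 0 by rewrite pnatr_eq0 expn_eq0.
rewrite /c /cexpr; field; by rewrite H4 pnatr_eq0 expn_eq0.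
Qed.
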